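(* Let $S=\{X_1,\dots,X_n\}$ be a dataset, $H$ a class of binary classifiers, and $W_1,\dots,W_n$ weights with $1\le W_i\le\lambda$ for all $i$. Then for every $h\in H$, the weighted disagreement coefficient satisfies $\theta^W_h\le\lambda^2\theta_h$, where $\theta_h$ is the (unweighted) disagreement coefficient of $h$.
   Context: Unweighted: $D(h_1,h_2)=\frac1n\sum_i\mathbb{I}(h_1(X_i)\ne h_2(X_i))$, $B_H(h,r)=\{h'\in H:D(h,h')\le r\}$, $\mathrm{DIS}(V)=\{X_i:\exists h_1,h_2\in V,h_1(X_i)\ne h_2(X_i)\}$, $\theta_h=\sup_{r>0}\frac{|\mathrm{DIS}(B_H(h,r))|}{rn}$. Weighted: $D^W(h_1,h_2)=\frac{\sum_i W_i\mathbb{I}(h_1(X_i)\ne h_2(X_i))}{\sum_i W_i}$, $B^W_H(h,r)=\{h'\in H:D^W(h,h')\le r\}$, and $\theta^W_h=\sup_{r>0}\frac{\sum_{i: X_i\in\mathrm{DIS}(B^W_H(h,r))}W_i}{r\sum_{i=1}^nW_i}$. *)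

(* Defs.v *)
From HB Require Import structures.
From mathcomp Require Import all_boot all_order all_algebra.
From mathcomp Require Import boolp classical_sets reals constructive_ereal ereal.
Set Implicit Arguments. Unset Strict Implicit. Unset Printing Implicit Defensive.
Import Order.TTheory GRing.Theory Num.Theory.
Local Open Scope ring_scope.
Local Open Scope classical_set_scope.

Section Disagreement.
Variables (R : realType) (X : Type) (n : nat) (x : 'I_n -> X).

Definition dist (h1 h2 : X -> bool) : R :=
  (\sum_(i < n) (h1 (x i) != h2 (x i))%:R) / n%:R.

Definition ballH (H : set (X -> bool)) (h : X -> bool) (r : R) : set (X -> bool) :=
  [set h' | H h' /\ dist h h' <= r].

(* disagreement region, as a set of indices i of data points X_i *)
Definition DIS (V : set (X -> bool)) : pred 'I_n :=
  fun i => `[< exists h1 h2, [/\ V h1, V h2 & h1 (x i) != h2 (x i)] >].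

Definition theta (H : set (X -> bool)) (h : X -> bool) : \bar R :=
  ereal_sup [set ((#|DIS (ballH H h r)|)%:R / (r * n%:R))%:E | r in [set r : R | 0 < r]].

Variable W : 'I_n -> R.

Definition distW (h1 h2 : X -> bool) : R :=
  (\sum_(i < n) W i * (h1 (x i) != h2 (x i))%:R) / (\sum_(i < n) W i).

Definition ballHW (H : set (X -> bool)) (h : X -> bool) (r : R) : set (X -> bool) :=
  [set h' | H h' /\ distW h h' <= r].

Definition thetaW (H : set (X -> bool)) (h : X -> bool) : \bar R :=
  ereal_sup [set ((\sum_(i < n | DIS (ballHW H h r) i) W i) / (r * \sum_(i < n) W i))%:E
            | r in [set r : R | 0 < r]].
End Disagreement.
Arguments theta R [X n] x H h.
Arguments thetaW R [X n] x W H h.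

(* Main.v *)
Require Import Defs.
From HB Require Import structures.
From mathcomp Require Import all_boot all_order all_algebra.
From mathcomp Require Import boolp classical_sets reals constructive_ereal ereal.
From mathcomp Require Import ring lra.
Import Order.TTheory GRing.Theory Num.Theory.
Local Open Scope ring_scope.
Local Open Scope classical_set_scope.

Lemma DIS_mono (R : realType) (X : Type) (n : nat) (x : 'I_n -> X)
  (V V' : set (X -> bool)) i : V `<=` V' -> DIS x V i -> DIS x V' i.
Proof.
move=> sub /asboolP [h1 [h2 [v1 v2 d]]]; apply/asboolP.
by exists h1, h2; split => //; apply: sub.
Qed.

Lemma sum_card (R : realType) n (P : pred 'I_n) (c : R) :
  \sum_(i < n | P i) c = c * #|P|%:R.
Proof. by rewrite sumr_const mulr_natr. Qed.

Theorem theorem11 (R : realType) (X : Type) (n : nat) (x : 'I_n -> X)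
  (H : set (X -> bool)) (W : 'I_n -> R) (lambda : R) :
  (forall i, 1 <= W i <= lambda) ->
  forall h, H h ->
  (thetaW R x W H h <= (lambda ^+ 2)%:E * theta R x H h)%E.
Proof.
move=> HW h Hh.
case: n x W HW => [|n] x W HW.
  have th0 : (0 <= theta R x H h)%E.
    apply: le_trans (ereal_sup_ubound (ex_intro2 _ _ 1 ltr01 erefl)).
    by rewrite mulr0 invr0 mulr0.
  apply: ge_ereal_sup => _ [r r0 <-].
  rewrite big_ord0 mul0r; apply: mule_ge0 => //.
  by rewrite lee_fin sqr_ge0.
have l1 : 1 <= lambda by case/andP: (HW ord0) => /le_trans; apply.
have l0 : 0 < lambda by apply: lt_le_trans l1.
have n0 : (0 : R) < n.+1%:R by rewrite ltr0n.
set S := \sum_(i < n.+1) W i.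
have Sn : n.+1%:R <= S.
  have -> : (n.+1)%:R = \sum_(i < n.+1 | predT i) (1 : R).
    by rewrite sum_card mul1r cardT size_enum_ord.
  by apply: ler_sum => i _; case/andP: (HW i).
have S0 : 0 < S by apply: lt_le_trans Sn.
apply: ge_ereal_sup => _ [r /= r0 <-].
have lr0 : 0 < lambda * r by rewrite mulr_gt0.
apply: le_trans (lee_wpmul2l _ (ereal_sup_ubound (ex_intro2 _ _ (lambda * r) lr0 erefl))); last first.
  by rewrite lee_fin sqr_ge0.
rewrite -EFinM lee_fin.
set B := DIS x (ballH x H h (lambda * r)).
have sub : ballHW x W H h r `<=` ballH x H h (lambda * r).
  move=> h' [Hh' d]; split => //.
  rewrite /distW -/S ler_pdivrMr // in d.
  rewrite /dist ler_pdivrMr //.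
  apply: le_trans (_ : \sum_(i < n.+1) W i * (h (x i) != h' (x i))%:R <= _).
    by apply: ler_sum => i _; rewrite ler_peMl //; case/andP: (HW i).
  apply: (le_trans d); idtac.
  rewrite (mulrC lambda) -mulrA; apply: ler_wpM2l; first exact: ltW.
  have -> : lambda * (n.+1)%:R = \sum_(i < n.+1 | predT i) lambda.
    by rewrite sum_card cardT size_enum_ord.
  by apply: ler_sum => i _; case/andP: (HW i).
have sumB : \sum_(i < n.+1 | DIS x (ballHW x W H h r) i) W i <= lambda * #|B|%:R.
  rewrite -sum_card big_mkcond [X in _ <= X]big_mkcond.
  apply: ler_sum => i _; case: ifP => Ai.
    by rewrite /B (@DIS_mono R _ _ x _ _ i sub Ai); case/andP: (HW i).
  by case: ifP => _ //; exact: ltW.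
rewrite -/S.
have c0 : 0 <= #|B|%:R :> R by rewrite ler0n.
have rS : 0 < r * S by rewrite mulr_gt0.
have iS : 0 <= (r * S)^-1 by rewrite invr_ge0 ltW.
apply: (le_trans (ler_wpM2r iS sumB)).
rewrite ler_pdivrMr //.
have -> : lambda ^+ 2 * (#|B|%:R / (lambda * r * n.+1%:R)) * (r * S)
   = (lambda * #|B|%:R) * (S / n.+1%:R).
  by field; rewrite ?lt0r_neq0 ?(gt_eqF) //; apply/and3P; split; rewrite lt0r_neq0.
apply: ler_peMr; first by rewrite mulr_ge0 // ltW.
by rewrite ler_pdivlMr // mul1r.
Qed.
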